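(* Let $\psi$ be a real function defined on a set containing $(-\infty,0]$ with $\psi \in \mathrm{BT}(\mathbb{R}_-)$. Then $$\{\mathrm{id} - f : f \in \mathrm{Sol}(\psi)\} = \mathrm{Sol}(\mathrm{id}-\psi) \quad\text{and}\quad \{\mathrm{id} - f : f \in \mathrm{Sol}^\#(\psi)\} = \mathrm{Sol}^\#(\mathrm{id}-\psi),$$ where $\mathrm{id} - f$ denotes $x \mapsto x - f(x)$.
   Context: $\mathbb{R}_- = (-\infty,0]$. For $I \in \{\mathbb{R}_-, \mathbb{R}\}$ and $g : D \subseteq \mathbb{R} \to \mathbb{R}$, $g \in \mathrm{BT}(I)$ means $I \subseteq D$ and $xg(x) \ge 0$, $x(x-g(x)) \ge 0$ for all $x \in I$; $g \in \mathrm{BT}^\#(I)$ means additionally both inequalities are strict for $x \in I$, $x \ne 0$ (nothing is required of $g(0)$). For $\psi \in \mathrm{BT}(\mathbb{R}_-)$, $\mathrm{Sol}(\psi)$ is the set of functions $f \in \mathrm{BT}(\mathbb{R})$ such that $f(x) = \psi(x)$ for all $x \le 0$ and $f(f(-x)+x) = f(-f(x)) + f(x)$ for all $x \in \mathbb{R}$; $\mathrm{Sol}^\#(\psi) := \mathrm{Sol}(\psi) \cap \mathrm{BT}^\#(\mathbb{R})$. *)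

(* Defs.v *)
From Stdlib Require Import Reals.
Open Scope R_scope.

Definition Rminus_set (x : R) : Prop := x <= 0.
Definition Rall (x : R) : Prop := True.

Definition BT (I : R -> Prop) (g : R -> R) : Prop :=
  forall x, I x -> 0 <= x * g x /\ 0 <= x * (x - g x).

Definition BTs (I : R -> Prop) (g : R -> R) : Prop :=
  BT I g /\ forall x, I x -> x <> 0 -> 0 < x * g x /\ 0 < x * (x - g x).

Definition idminus (g : R -> R) : R -> R := fun x => x - g x.

Definition Sol (psi : R -> R) (f : R -> R) : Prop :=
  BT Rall f /\
  (forall x, x <= 0 -> f x = psi x) /\
  (forall x, f (f (- x) + x) = f (- f x) + f x).

Definition Sols (psi : R -> R) (f : R -> R) : Prop :=
  Sol psi f /\ BTs Rall f.

(* Main.v *)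
Require Import Defs.
From Stdlib Require Import Reals Lra FunctionalExtensionality.
Open Scope R_scope.

Lemma idmK (g : R -> R) : idminus (idminus g) = g.
Proof. apply functional_extensionality; intro x; unfold idminus; ring. Qed.

Lemma eq_idm (f : R -> R) :
  (forall x, f (f (- x) + x) = f (- f x) + f x) ->
  (forall x, idminus f (idminus f (- x) + x) = idminus f (- idminus f x) + idminus f x).
Proof.
  intros H x; unfold idminus.
  replace (- x - f (- x) + x) with (- f (- x)) by ring.
  replace (- (x - f x)) with (f x - x) by ring.
  pose proof (H (- x)) as Hx.
  replace (- - x) with x in Hx by ring.
  replace (f x + - x) with (f x - x) in Hx by ring.
  rewrite Hx. ring.
Qed.

Lemma bt_idm (f : R -> R) : BT Rall f -> BT Rall (idminus f).
Proof.
  intros H x Hx; destruct (H x Hx) as [A B]; unfold idminus; split.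
  - exact B.
  - replace (x - (x - f x)) with (f x) by ring; exact A.
Qed.

Lemma bts_idm (f : R -> R) : BTs Rall f -> BTs Rall (idminus f).
Proof.
  intros [H1 H2]; split; [apply bt_idm; exact H1|].
  intros x Hx Hn; destruct (H2 x Hx Hn) as [A B]; unfold idminus; split.
  - exact B.
  - replace (x - (x - f x)) with (f x) by ring; exact A.
Qed.

Lemma sol_idm (psi f : R -> R) : Sol psi f -> Sol (idminus psi) (idminus f).
Proof.
  intros [H1 [H2 H3]]; split; [apply bt_idm; exact H1|split].
  - intros x Hx; unfold idminus; rewrite (H2 x Hx); reflexivity.
  - apply eq_idm; exact H3.
Qed.

Lemma sol_idm_inv (psi g : R -> R) : Sol (idminus psi) g -> Sol psi (idminus g).
Proof.
  intro H; apply sol_idm in H; rewrite idmK in H; exact H.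
Qed.

Theorem proposition1 (psi : R -> R) (Hpsi : BT Rminus_set psi) :
  (forall g : R -> R,
     (exists f, Sol psi f /\ g = idminus f) <-> Sol (idminus psi) g) /\
  (forall g : R -> R,
     (exists f, Sols psi f /\ g = idminus f) <-> Sols (idminus psi) g).
Proof.
  split; intro g; split.
  - intros [f [Hf ->]]; apply sol_idm; exact Hf.
  - intro H; exists (idminus g); split; [apply sol_idm_inv; exact H | symmetry; apply idmK].
  - intros [f [[Hf Hs] ->]]; split; [apply sol_idm; exact Hf | apply bts_idm; exact Hs].
  - intros [H Hs]; exists (idminus g); split; [split|symmetry; apply idmK].
    + apply sol_idm_inv; exact H.
    + apply bts_idm; exact Hs.
Qed.
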